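(* Let $L$ and $R$ be finite sets of edges (2-subsets of $[n]$) and $M$ a finite set of triangles (3-subsets of $[n]$), satisfying: (LR) there are no $\{l_1<l_2\}\in L$ and $\{r_1<r_2\}\in R$ with $r_1<l_1<r_2<l_2$; (LMR) there are no $\{v_1<v_2\}\in L\cup R$ and $\{w_1<w_2<w_3\}\in M$ with $w_1<v_1<w_2<v_2<w_3$; (MM) there are no $\{v_1<v_2<v_3\},\{w_1<w_2<w_3\}\in M$ with $v_1<w_1<v_2<w_2<v_3<w_3$. For an edge $e=\{v_1<v_2\}$ consider the conditions: (Le) there is no $\{l_1<l_2\}\in L$ with $v_1<l_1<v_2<l_2$; (Me) there is no $\{w_1<w_2<w_3\}\in M$ with $w_1<v_1<w_2<v_2<w_3$; (Re) there is no $\{r_1<r_2\}\in R$ with $r_1<v_1<r_2<v_2$. Let $V\subseteq[n]$ with $|V|\ge3$ be such that every edge of the convex polygon $P=\mathrm{conv}(V)$ (the points $\gamma_2(t_i)$, $i\in V$) satisfies (Le), (Me) and (Re). Then there is a triangulation $T$ of $P$ with vertices in $V$ such that every edge of $T$ satisfies (Le), (Me) and (Re).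
   Context: $\gamma_2=\{(t,t^2):t\in\mathbb{R}\}$. Fix $t_1<\dots<t_n$ and identify $\gamma_2(t_i)$ with $i\in[n]$; subsets of $[n]$ are ordered by the usual order of integers. $L$ and $R$ may intersect, and any of $L,M,R$ may be empty. *)

(* Defs.v *)
From HB Require Import structures.
From mathcomp Require Import all_boot all_order all_algebra.
Set Implicit Arguments. Unset Strict Implicit. Unset Printing Implicit Defensive.
Import Order.TTheory GRing.Theory Num.Theory.
Local Open Scope ring_scope.

Section Defs.
Variables (R : realFieldType) (n : nat) (t : 'I_n -> R).

Definition pt (i : 'I_n) : R * R := (t i, t i ^+ 2).

Definition conv (S : {set 'I_n}) (x : R * R) : Prop :=
  exists lam : 'I_n -> R,
    [/\ forall i, 0 <= lam i,
        forall i, i \notin S -> lam i = 0,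
        \sum_i lam i = 1 &
        x = (\sum_i lam i * (pt i).1, \sum_i lam i * (pt i).2)].

Definition orient (a b c : 'I_n) : R :=
  ((pt b).1 - (pt a).1) * ((pt c).2 - (pt a).2)
  - ((pt b).2 - (pt a).2) * ((pt c).1 - (pt a).1).

(* {a,b} is an edge of the convex polygon conv(V): the line through pt a, pt b
   supports conv(V), i.e. all points of V lie weakly on one side of it. *)
Definition polygon_edge (V : {set 'I_n}) (a b : 'I_n) : Prop :=
  [/\ a \in V, b \in V, a != b &
      (forall c, c \in V -> 0 <= orient a b c) \/
      (forall c, c \in V -> orient a b c <= 0)].

(* T is a triangulation of conv(V) with vertices in V: a set of triangles
   (3-subsets of V) whose convex hulls cover conv(V) and any two of which
   intersect in the convex hull of their common vertices (a common face). *)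
Definition is_triangulation (V : {set 'I_n}) (T : {set {set 'I_n}}) : Prop :=
  [/\ forall s, s \in T -> s \subset V /\ #|s| = 3,
      forall x, conv V x <-> exists2 s, s \in T & conv s x &
      forall s1 s2, s1 \in T -> s2 \in T ->
        forall x, (conv s1 x /\ conv s2 x) <-> conv (s1 :&: s2) x].
End Defs.

Section Conds.
Variable n : nat.
Implicit Types (L Rg : {set {set 'I_n}}) (M : {set {set 'I_n}}).

Definition condLR L Rg : Prop :=
  ~ exists l1 l2 r1 r2 : 'I_n,
      [/\ [set l1; l2] \in L, [set r1; r2] \in Rg &
          [/\ (r1 < l1)%N, (l1 < r2)%N & (r2 < l2)%N]].

Definition condLMR L M Rg : Prop :=
  ~ exists v1 v2 w1 w2 w3 : 'I_n,
      [/\ [set v1; v2] \in L :|: Rg, [set w1; w2; w3] \in M &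
          [/\ (w1 < v1)%N, (v1 < w2)%N, (w2 < v2)%N & (v2 < w3)%N]].

Definition condMM M : Prop :=
  ~ exists v1 v2 v3 w1 w2 w3 : 'I_n,
      [/\ [set v1; v2; v3] \in M, [set w1; w2; w3] \in M &
          [/\ (v1 < w1)%N, (w1 < v2)%N, (v2 < w2)%N, (w2 < v3)%N & (v3 < w3)%N]].

Definition condLe L (v1 v2 : 'I_n) : Prop :=
  ~ exists l1 l2 : 'I_n,
      [/\ [set l1; l2] \in L, (v1 < l1)%N, (l1 < v2)%N & (v2 < l2)%N].

Definition condMe M (v1 v2 : 'I_n) : Prop :=
  ~ exists w1 w2 w3 : 'I_n,
      [/\ [set w1; w2; w3] \in M &
          [/\ (w1 < v1)%N, (v1 < w2)%N, (w2 < v2)%N & (v2 < w3)%N]].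

Definition condRe Rg (v1 v2 : 'I_n) : Prop :=
  ~ exists r1 r2 : 'I_n,
      [/\ [set r1; r2] \in Rg, (r1 < v1)%N, (v1 < r2)%N & (r2 < v2)%N].

Definition edge_ok L M Rg (e : {set 'I_n}) : Prop :=
  forall v1 v2 : 'I_n, e = [set v1; v2] -> (v1 < v2)%N ->
    [/\ condLe L v1 v2, condMe M v1 v2 & condRe Rg v1 v2].
End Conds.

(* Main.v *)
Require Import Defs.
From HB Require Import structures.
From mathcomp Require Import all_boot all_order all_algebra.
From mathcomp Require Import ring lra zify.
From Stdlib Require Import Classical IndefiniteDescription.
Import Order.TTheory GRing.Theory Num.Theory.

Lemma last_sat (P : nat -> Prop) p q : (p <= q)%N -> P p ->
  exists m, [/\ (p <= m <= q)%N, P m & forall i, (m < i)%N -> (i <= q)%N -> ~ P i].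
Proof.
elim: q => [|q IH] hpq hp.
  exists p; split => //; last by move=> i hi1 hi2; lia.
  lia.
case: (leqP p q) => hpq'.
  have [m [hm1 hm2 hm3]] := IH hpq' hp.
  case: (classic (P q.+1)) => hq.
    exists q.+1; split => //; [lia| move=> i h1 h2; lia].
  exists m; split => //; first lia.
  move=> i h1 h2; case: (ltngtP i q.+1) => hi; [apply: hm3; lia| lia| by rewrite hi].
have hp2 : p = q.+1 by lia. subst p.
exists q.+1; split => //; [lia | move=> i h1 h2; lia].
Qed.

Lemma first_sat (P : nat -> Prop) p q : (p <= q)%N -> P q ->
  exists j, [/\ (p <= j <= q)%N, P j & forall i, (p <= i)%N -> (i < j)%N -> ~ P i].
Proof.
elim: q {-2}q (leqnn q) => [|q IH] q' hq' hpq hq.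
  exists q'; split => //; [lia| move=> i h1 h2; lia].
case: (classic (exists i, [/\ (p <= i)%N, (i < q')%N & P i])) => [[i [h1 h2 h3]]|hn].
  have [j [hj1 hj2 hj3]] := IH i ltac:(lia) h1 h3.
  exists j; split => //; lia.
exists q'; split => //; first lia.
move=> i h1 h2 hp; apply: hn; exists i; split => //.
Qed.

Section Abs.
Variables (k : nat) (u A B : nat -> nat).
Hypothesis umono : forall i j, (i < j)%N -> (j < k)%N -> (u i < u j)%N.
Hypothesis HA : forall i, (1 <= i)%N -> (i <= k - 2)%N -> (A i < u i.-1)%N /\ (u i.+1 < B i)%N.
Hypothesis C0 : forall i, (1 <= i)%N -> (i <= k - 2)%N -> ~ ((A i < u 0)%N /\ (u k.-1 < B i)%N).
Hypothesis C1 : forall i j, (1 <= i)%N -> (i < j)%N -> (j <= k - 2)%N ->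
  ~ [/\ (A i < A j)%N, (A j < u i)%N, (u j < B i)%N & (B i < B j)%N].

Definition Inv lo hi p q :=
  [/\ [/\ (1 <= p)%N, (p <= q)%N & (q <= k - 2)%N],
      [/\ (A p < lo)%N, (hi < B q)%N & (lo <= A q)%N],
      (forall i, (p <= i)%N -> (i <= q)%N -> ~ ((A i < lo)%N /\ (hi < B i)%N)) &
      (lo <= u p)%N].

Lemma umono_le i j : (i <= j)%N -> (j < k)%N -> (u i <= u j)%N.
Proof.
move=> h1 h2; case: (ltngtP i j) => h; [by apply/ltnW/umono| lia| by rewrite h].
Qed.

Lemma abs_step lo hi p q : Inv lo hi p q ->
  exists lo' hi' p' q', Inv lo' hi' p' q' /\ (lo < lo')%N /\ (lo' <= u k.-1)%N.
Proof.
case=> [[hp1 hpq hqk] [hAp hBq hAq] H3 H4].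
have hpq2 : (p < q)%N.
  case: (ltngtP p q) => h; [done| lia| subst; lia].
have [m [hm1 hm2 hm3]] := @last_sat (fun i => (A i < lo)%N) p q hpq hAp.
have hmq : (m < q)%N.
  case: (ltngtP m q) => h; [done| lia| subst; lia].
have hBm : (B m <= hi)%N.
  have := H3 m ltac:(lia) ltac:(lia); lia.
have [j [hj1 hj2 hj3]] := @first_sat (fun i => (B m < B i)%N) m.+1 q hmq ltac:(simpl; lia).
simpl in hj2.
have hBj1 : (B j.-1 <= B m)%N.
  case: (ltngtP m j.-1) => h.
  - have := hj3 j.-1 ltac:(lia) ltac:(lia); lia.
  - lia.
  - by rewrite -h.
have hAj : (lo <= A j)%N.
  case: (leqP lo (A j)) => // h; exfalso; apply: (hm3 j) => //; lia.
have hHAj1 := HA j.-1 ltac:(lia) ltac:(lia).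
have hjS : j.-1.+1 = j by lia.
rewrite hjS in hHAj1.
have hHAm := HA m ltac:(lia) ltac:(lia).
have hC1 := C1 m j ltac:(lia) ltac:(lia) ltac:(lia).
have humj : (u m <= A j)%N.
  case: (leqP (u m) (A j)) => // h; exfalso; apply: hC1; split; lia.
have hum1 : (u m.-1 < u m)%N by apply: umono; lia.
have hlo : (lo < u m)%N.
  case: (ltngtP lo (u p)) => h.
  - have := @umono_le p m ltac:(lia) ltac:(lia); lia.
  - lia.
  - have hpm : (p < m)%N.
      case: (ltngtP p m) => h2; [done| lia|].
      subst m; exfalso; apply: (hm3 p.+1); try lia.
      have := HA p.+1 ltac:(lia) ltac:(lia); simpl; lia.
    have := umono p m hpm ltac:(lia); lia.
exists (u m), (B m), m, j; split; last first.
  split => //; apply: umono_le; lia.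
split => //; try (split; lia).
move=> i hi1 hi2.
case: (ltngtP i m) => h; first lia.
- case: (ltngtP i j) => h2.
  + have := hj3 i ltac:(lia) h2; lia.
  + lia.
  + subst i; lia.
- subst i; lia.
Qed.

Lemma abs_rec d : forall lo hi p q, (u k.-1 - lo <= d)%N -> Inv lo hi p q -> False.
Proof.
elim: d => [|d IH] lo hi p q hd hI; have [lo' [hi' [p' [q' [hI' [h1 h2]]]]]] := abs_step _ _ _ _ hI.
  lia.
apply: (IH lo' hi' p' q') => //; lia.
Qed.

Lemma abs_main : (3 <= k)%N -> False.
Proof.
move=> hk.
apply: (abs_rec (u k.-1) (u 0) (u k.-1) 1 (k - 2)); first lia.
have hA1 := HA 1 ltac:(lia) ltac:(lia). simpl in hA1.
have hAq := HA (k-2) ltac:(lia) ltac:(lia).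
have e : (k - 2).+1 = k.-1 by lia.
rewrite e in hAq.
have hC := C0 (k-2) ltac:(lia) ltac:(lia).
have hA0 : (u 0 <= A (k-2))%N.
  case: (leqP (u 0) (A (k-2))) => // h; exfalso; apply: hC; lia.
split.
- split; lia.
- split; lia.
- move=> i h1 h2; apply: C0; lia.
- apply: umono_le; lia.
Qed.
End Abs.

Set Implicit Arguments. Unset Strict Implicit. Unset Printing Implicit Defensive.

Section Sorted.
Variables (n : nat) (V : {set 'I_n}) (x0 : 'I_n).
Definition os := enum V.
Definition U i := nth x0 os i.

Lemma size_os : size os = #|V|.
Proof. by rewrite /os -cardE. Qed.

Lemma os_sorted : sorted ltn (map val os).
Proof.
rewrite /os -[enum _](eq_filter (mem_enum _)).
rewrite -(eq_filter (mem_map val_inj _)) -filter_map.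
by rewrite (sorted_filter ltn_trans) // unlock val_ord_enum iota_ltn_sorted.
Qed.

Lemma U_mono i j : (i < j)%N -> (j < #|V|)%N -> (U i < U j)%N.
Proof.
move=> hij hj.
have := sorted_ltn_nth ltn_trans 0 os_sorted.
move/(_ i j); rewrite !inE size_map size_os => /(_ ltac:(lia) hj hij).
by rewrite !(nth_map x0) ?size_os //; lia.
Qed.

Lemma U_in i : (i < #|V|)%N -> U i \in V.
Proof. by move=> hi; rewrite -mem_enum; apply: mem_nth; rewrite size_os. Qed.

Lemma U_surj c : c \in V -> exists2 i, (i < #|V|)%N & U i = c.
Proof.
move=> hc; exists (index c os); first by rewrite -size_os index_mem /os mem_enum.
by apply: nth_index; rewrite /os mem_enum.
Qed.

Lemma U_refl i j : (i < #|V|)%N -> (j < #|V|)%N -> (U i < U j)%N -> (i < j)%N.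
Proof.
move=> hi hj h; case: (ltngtP i j) => // h2.
  by have := U_mono h2 hi; lia.
by move: h; rewrite h2 ltnn.
Qed.

Lemma U_consec i c : (i.+1 < #|V|)%N -> c \in V -> ~~ ((U i < c) && (c < U i.+1))%N.
Proof.
move=> hi hc; have [j hj <-] := U_surj hc; apply/negP => /andP [h1 h2].
have hi' : (i < #|V|)%N by lia.
have := U_refl hi' hj h1; have := U_refl hj hi h2; lia.
Qed.

Lemma U_ext c : (0 < #|V|)%N -> c \in V -> ((U 0 <= c) && (c <= U #|V|.-1))%N.
Proof.
move=> h0 hc; have [j hj <-] := U_surj hc; apply/andP; split.
  case: j hj => [|j] hj //; apply: ltnW; apply: U_mono; lia.
case: (ltngtP j #|V|.-1) => h; [apply: ltnW; apply: U_mono; lia| lia| by rewrite h].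
Qed.
End Sorted.

Section Ears.
Variables (n : nat) (L M Rg : {set {set 'I_n}}).
Hypotheses (hLR : condLR L Rg) (hLMR : condLMR L M Rg) (hMM : condMM M).

Definition conds (a b : 'I_n) := [/\ condLe L a b, condMe M a b & condRe Rg a b].

Definition Wp (v : 'I_n) (a b : nat) : Prop :=
  [\/ a = 0%N /\ exists l2 : 'I_n, [set v; l2] \in L /\ b = l2.+1,
      b = n.+1 /\ exists r1 : 'I_n, [set r1; v] \in Rg /\ a = r1.+1 |
      exists w1 w3 : 'I_n, [/\ [set w1; v; w3] \in M, a = w1.+1 & b = w3.+1]].

Lemma witness (p v q : 'I_n) : (p < v)%N -> (v < q)%N -> ~ conds p q -> conds p v -> conds v q ->
  exists a b, [/\ (a < p.+1)%N, (q.+1 < b)%N, (b <= n.+1)%N & Wp v a b].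
Proof.
move=> hpv hvq hpq [c1 c2 c3] [d1 d2 d3].
have : ~ condLe L p q \/ ~ condMe M p q \/ ~ condRe Rg p q.
  apply: NNPP => h; apply: hpq; split; apply: NNPP => h'; apply: h; tauto.
move=> [/NNPP [l1 [l2 [hl h1 h2 h3]]] | [/NNPP [w1 [w2 [w3 [hw [h1 h2 h3 h4]]]]] | /NNPP [r1 [r2 [hr h1 h2 h3]]]]].
- have e : l1 = v.
    apply: val_inj; case: (ltngtP l1 v) => h //.
      by exfalso; apply: c1; exists l1, l2; split => //; lia.
    by exfalso; apply: d1; exists l1, l2; split => //; lia.
  subst l1; exists 0%N, l2.+1; split => //; try lia.
    by have := ltn_ord l2; lia.
  by apply: Or31; split => //; exists l2.
- have e : w2 = v.
    apply: val_inj; case: (ltngtP w2 v) => h //.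
      by exfalso; apply: c2; exists w1, w2, w3; split => //; split; lia.
    by exfalso; apply: d2; exists w1, w2, w3; split => //; split; lia.
  subst w2; exists w1.+1, w3.+1; split => //; try lia.
    by have := ltn_ord w3; lia.
  by apply: Or33; exists w1, w3.
- have e : r2 = v.
    apply: val_inj; case: (ltngtP r2 v) => h //.
      by exfalso; apply: c3; exists r1, r2; split => //; lia.
    by exfalso; apply: d3; exists r1, r2; split => //; lia.
  subst r2; exists r1.+1, n.+1; split => //; try lia.
    by have := ltn_ord q; lia.
  by apply: Or32; split => //; exists r1.
Qed.

Lemma wC1 (v v' : 'I_n) a b a' b' : (v < v')%N -> (b' <= n.+1)%N -> Wp v a b -> Wp v' a' b' ->
  ~ [/\ (a < a')%N, (a' < v.+1)%N, (v'.+1 < b)%N & (b < b')%N].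
Proof.
move=> hvv hb' W1 W2 [h1 h2 h3 h4].
case: W1 => [[e1 [l2 [hl e2]]] | [e1 [r1 [hr e2]]] | [w1 [w3 [hw e1 e2]]]]; subst a b; try lia.
- case: W2 => [[e1 [l2' [hl' e2]]] | [e1 [r1 [hr e2]]] | [w1 [w3 [hw e1 e2]]]]; subst a' b'; try lia.
  + apply: hLR; exists v, l2, r1, v'; split => //; try (split; lia).
  + apply: hLMR; exists v, l2, w1, v', w3; split => //; rewrite ?in_setU ?hl //; try (split; lia).
- case: W2 => [[e1 [l2' [hl' e2]]] | [e1 [r1 [hr e2]]] | [w1' [w3' [hw' e1 e2]]]]; subst a' b'; try lia.
  + apply: hLMR; exists r1, v', w1, v, w3; split => //; rewrite ?in_setU ?hr ?orbT //; try (split; lia).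
  + apply: hMM; exists w1, v, w3, w1', v', w3'; split => //; try (split; lia).
Qed.

Lemma wC0 (lo v hi : 'I_n) a b : (lo < v)%N -> (v < hi)%N -> conds lo hi -> Wp v a b ->
  ~ ((a < lo.+1)%N /\ (hi.+1 < b)%N).
Proof.
move=> h1 h2 [c1 c2 c3] W [h3 h4].
case: W => [[e1 [l2 [hl e2]]] | [e1 [r1 [hr e2]]] | [w1 [w3 [hw e1 e2]]]]; subst a b.
- by apply: c1; exists v, l2; split => //; lia.
- by apply: c3; exists r1, v; split => //; lia.
- by apply: c2; exists w1, v, w3; split => //; split; lia.
Qed.

Definition HB (V : {set 'I_n}) := forall a b : 'I_n, a \in V -> b \in V -> (a < b)%N ->
  ((forall c, c \in V -> ~~ ((a < c) && (c < b))%N) \/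
   (forall c, c \in V -> ((a <= c) && (c <= b))%N)) -> conds a b.

Lemma find_ear (V : {set 'I_n}) : (4 <= #|V|)%N -> HB V ->
  exists x v y : 'I_n,
    [/\ [/\ x \in V, v \in V, y \in V, (x < v)%N & (v < y)%N],
        (forall c, c \in V -> ~~ ((x < c) && (c < v))%N),
        (forall c, c \in V -> ~~ ((v < c) && (c < y))%N) & conds x y].
Proof.
move=> hV hB.
have [x0 hx0] : exists x0, x0 \in V by apply/card_gt0P; lia.
set k := #|V| in hV.
pose UU := U V x0.
apply: NNPP => hno.
have hear : forall i, (1 <= i)%N -> (i <= k - 2)%N -> ~ conds (UU i.-1) (UU i.+1).
  move=> i h1 h2 hc; apply: hno; exists (UU i.-1), (UU i), (UU i.+1); split => //.
  - split; try (apply: U_in; rewrite -/k; lia); apply: U_mono; rewrite -/k; lia.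
  - have e : i = i.-1.+1 by lia.
    move=> c hc'; rewrite [X in (c < nat_of_ord (UU X))%N]e; apply: U_consec => //; rewrite -/k; lia.
  - move=> c hc'; apply: U_consec => //; rewrite -/k; lia.
have hcons : forall i, (i.+1 < k)%N -> conds (UU i) (UU i.+1).
  move=> i hi; apply: hB; try (apply: U_in; rewrite -/k; lia).
    apply: U_mono; rewrite -/k; lia.
  by left => c hc; apply: U_consec.
have hext : conds (UU 0) (UU k.-1).
  apply: hB; try (apply: U_in; rewrite -/k; lia).
    apply: U_mono; rewrite -/k; lia.
  by right => c hc; apply: U_ext => //; lia.
have hW : forall i, exists ab : nat * nat, (1 <= i)%N -> (i <= k - 2)%N ->
    [/\ (ab.1 < (UU i.-1).+1)%N, ((UU i.+1).+1 < ab.2)%N, (ab.2 <= n.+1)%N & Wp (UU i) ab.1 ab.2].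
  move=> i; case: (boolP ((1 <= i) && (i <= k - 2))%N) => hi; last first.
    by exists (0%N, 0%N) => h1 h2; move: hi; rewrite h1 h2.
  move/andP: hi => [h1 h2].
  have e : i = i.-1.+1 by lia.
  have [a [b hab]] := witness (p := UU i.-1) (v := UU i) (q := UU i.+1)
    ltac:(rewrite [X in (_ < nat_of_ord (UU X))%N]e; apply: U_mono; rewrite -/k; lia)
    ltac:(apply: U_mono; rewrite -/k; lia) (hear i h1 h2)
    ltac:(rewrite [X in conds _ (UU X)]e; apply: hcons; lia) (hcons i ltac:(lia)).
  by exists (a, b).
pose A i := (proj1_sig (constructive_indefinite_description _ (hW i))).1.
pose B i := (proj1_sig (constructive_indefinite_description _ (hW i))).2.
have hAB : forall i, (1 <= i)%N -> (i <= k - 2)%N ->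
    [/\ (A i < (UU i.-1).+1)%N, ((UU i.+1).+1 < B i)%N, (B i <= n.+1)%N & Wp (UU i) (A i) (B i)].
  by move=> i; rewrite /A /B; case: (constructive_indefinite_description _ (hW i)).
apply: (abs_main k (fun i => (UU i).+1) A B) => //.
- move=> i j hij hj; have := @U_mono _ V x0 _ _ hij hj; rewrite /UU; lia.
- by move=> i h1 h2; have [? ? _ _] := hAB i h1 h2.
- move=> i h1 h2; have [_ _ _ W] := hAB i h1 h2.
  apply: (wC0 (lo := UU 0) (hi := UU k.-1) _ _ hext W).
    apply: U_mono; rewrite -/k; lia.
  apply: U_mono; rewrite -/k; lia.
- move=> i j h1 h2 h3; have [_ _ _ W1] := hAB i h1 ltac:(lia).
  have [_ _ hb W2] := hAB j ltac:(lia) h3.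
  apply: (wC1 _ hb W1 W2); apply: U_mono; rewrite -/k; lia.
- lia.
Qed.
End Ears.

Local Open Scope ring_scope.

Section Geo.
Variables (R : realFieldType) (n : nat) (t : 'I_n -> R).
Hypothesis ht : forall i j : 'I_n, (i < j)%N -> t i < t j.

Definition gline (a b : 'I_n) (z : R * R) : R :=
  ((pt t b).1 - (pt t a).1) * (z.2 - (pt t a).2)
  - ((pt t b).2 - (pt t a).2) * (z.1 - (pt t a).1).

Lemma orientE a b c : orient t a b c = (t b - t a) * (t c - t a) * (t c - t b).
Proof. rewrite /orient /pt /=; ring. Qed.

Lemma gline_pt a b c : gline a b (pt t c) = orient t a b c.
Proof. by []. Qed.

Lemma gline_comb (lam : 'I_n -> R) a b : \sum_i lam i = 1 ->
  gline a b (\sum_i lam i * (pt t i).1, \sum_i lam i * (pt t i).2)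
  = \sum_i lam i * orient t a b i.
Proof.
move=> h1.
have e : forall i, lam i * orient t a b i =
  ((pt t b).1 - (pt t a).1) * (lam i * (pt t i).2)
  - ((pt t b).2 - (pt t a).2) * (lam i * (pt t i).1)
  + (((pt t b).2 - (pt t a).2) * (pt t a).1 - ((pt t b).1 - (pt t a).1) * (pt t a).2) * lam i.
  by move=> i; rewrite /orient; ring.
rewrite (eq_bigr _ (fun i _ => e i)) big_split /= sumrB -!mulr_sumr h1 /gline /=.
ring.
Qed.

Lemma gline_two a b (P Z : R * R) (r : R) :
  gline a b ((1 - r) * P.1 + r * Z.1, (1 - r) * P.2 + r * Z.2)
  = (1 - r) * gline a b P + r * gline a b Z.
Proof. rewrite /gline /=; ring. Qed.

Lemma glineC a b z : gline b a z = - gline a b z.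
Proof. rewrite /gline /pt /=; ring. Qed.

Lemma conv_sub (S S' : {set 'I_n}) z : S \subset S' -> conv t S z -> conv t S' z.
Proof.
move=> hS [lam [h0 h1 h2 h3]]; exists lam; split => // i hi.
apply: h1; apply: contra hi; exact: (subsetP hS).
Qed.

Lemma conv_gline_ge0 (S : {set 'I_n}) a b z : conv t S z ->
  (forall c, c \in S -> 0 <= orient t a b c) -> 0 <= gline a b z.
Proof.
move=> [lam [h0 h1 h2 ->]] hS; rewrite gline_comb //.
apply: sumr_ge0 => i _; case: (boolP (i \in S)) => hi.
  by apply: mulr_ge0 => //; apply: hS.
by rewrite h1 // mul0r.
Qed.

Lemma conv_gline_le0 (S : {set 'I_n}) a b z : conv t S z ->
  (forall c, c \in S -> orient t a b c <= 0) -> gline a b z <= 0.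
Proof.
move=> [lam [h0 h1 h2 ->]] hS; rewrite gline_comb //.
apply: sumr_le0 => i _; case: (boolP (i \in S)) => hi.
  by apply: mulr_ge0_le0 => //; apply: hS.
by rewrite h1 // mul0r.
Qed.

Lemma sum3 (a b c : 'I_n) (xa xb xc : R) (F : 'I_n -> R) :
  a != b -> a != c -> b != c ->
  \sum_i (if i == a then xa else if i == b then xb else if i == c then xc else 0) * F i
  = xa * F a + xb * F b + xc * F c.
Proof.
move=> hab hac hbc.
rewrite (bigD1 a) //= eqxx (bigD1 b) /=; last by rewrite eq_sym hab.
rewrite eq_sym (negbTE hab) eqxx (bigD1 c) /=; last by rewrite eq_sym hac eq_sym hbc.
rewrite eq_sym (negbTE hac) eq_sym (negbTE hbc) eqxx big1 ?addr0 ?addrA //.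
move=> i /andP [/andP [hia hib] hic].
by rewrite (negbTE hia) (negbTE hib) (negbTE hic) mul0r.
Qed.


Lemma bary (a b c : 'I_n) (z : R * R) :
  a != b -> a != c -> b != c -> 0 < orient t a b c ->
  0 <= gline b c z -> 0 <= gline c a z -> 0 <= gline a b z ->
  exists lam : 'I_n -> R,
    [/\ forall i, 0 <= lam i,
        forall i, i \notin [set a; b; c] -> lam i = 0,
        \sum_i lam i = 1,
        z = (\sum_i lam i * (pt t i).1, \sum_i lam i * (pt t i).2) &
        lam b = gline c a z / orient t a b c].
Proof.
move=> hab hac hbc hO g1 g2 g3.
set O := orient t a b c.
have hO0 : O != 0 by rewrite gt_eqF.
pose lam i := if i == a then gline b c z / O else if i == b then gline c a z / O
  else if i == c then gline a b z / O else 0.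
exists lam; split.
- move=> i; rewrite /lam; case: ifP => _; first by apply: divr_ge0 => //; apply: ltW.
  case: ifP => _; first by apply: divr_ge0 => //; apply: ltW.
  case: ifP => _ //; by apply: divr_ge0 => //; apply: ltW.
- by move=> i; rewrite !inE /lam; case: (i == a); case: (i == b); case: (i == c).
- have := sum3 (gline b c z / O) (gline c a z / O) (gline a b z / O) (fun _ => 1) hab hac hbc.
  rewrite (eq_bigr lam); last by move=> i _; rewrite mulr1.
  move=> ->; rewrite !mulr1.
  move: hO0; rewrite /O /gline /orient; case: z {g1 g2 g3 O hO lam} => z1 z2 /= hO0.
  by field.
- rewrite (sum3 _ _ _ (fun i => (pt t i).1) hab hac hbc).
  rewrite (sum3 _ _ _ (fun i => (pt t i).2) hab hac hbc).
  move: hO0; rewrite /O /gline /orient; case: z {g1 g2 g3 O hO lam} => z1 z2 /= hO0.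
  congr (_, _); field; done.
- by rewrite /lam eq_sym (negbTE hab) eqxx.
Qed.

Lemma lin2 (f g F : 'I_n -> R) (al D : R) :
  \sum_i (al * f i + g i) / D * F i = (al * \sum_i f i * F i + \sum_i g i * F i) / D.
Proof.
have e : forall i, (al * f i + g i) / D * F i = al / D * (f i * F i) + D^-1 * (g i * F i).
  by move=> i; rewrite /=; ring.
rewrite (eq_bigr _ (fun i _ => e i)) big_split /= -!mulr_sumr; ring.
Qed.

Lemma drop1 (lam F : 'I_n -> R) (v : 'I_n) :
  \sum_i (if i == v then 0 else lam i) * F i = \sum_i lam i * F i - lam v * F v.
Proof.
rewrite (bigD1 v) //= eqxx mul0r add0r [X in _ = X - _](bigD1 v) //= addrAC subrr add0r.
by apply: eq_bigr => i /negbTE ->.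
Qed.

Lemma tle (i j : 'I_n) : (i <= j)%N -> t i <= t j.
Proof.
rewrite leq_eqVlt => /orP [/eqP h|h]; last by apply/ltW/ht.
by have -> : i = j by apply: val_inj.
Qed.

Lemma neg_pos (a b : R) : a < 0 -> 0 < b -> a * b < 0.
Proof. move=> *; nra. Qed.
Lemma neg_neg (a b : R) : a < 0 -> b < 0 -> 0 < a * b.
Proof. move=> *; nra. Qed.

Section Ear.
Variables (V : {set 'I_n}) (x v y : 'I_n).
Hypotheses (hx : x \in V) (hv : v \in V) (hy : y \in V)
  (hxv : (x < v)%N) (hvy : (v < y)%N)
  (hc1 : forall c, c \in V -> ~~ ((x < c) && (c < v))%N)
  (hc2 : forall c, c \in V -> ~~ ((v < c) && (c < y))%N).

Lemma s1 c : c \in V -> 0 <= orient t x v c.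
Proof.
move=> hc; rewrite orientE -mulrA; have h0 := ht hxv.
apply: mulr_ge0; first lra.
have := hc1 hc.
case: (leqP c x) => h1 H.
  have := tle h1 => h2; by apply: mulr_le0; lra.
move: H => /=; rewrite -leqNgt => h2; have := tle h2 => h4.
by apply: mulr_ge0; have := ht h1; lra.
Qed.

Lemma s2 c : c \in V -> 0 <= orient t v y c.
Proof.
move=> hc; rewrite orientE -mulrA; have h0 := ht hvy.
apply: mulr_ge0; first lra.
have := hc2 hc.
case: (leqP c v) => h1 H.
  have := tle h1 => h2; by apply: mulr_le0; lra.
move: H => /=; rewrite -leqNgt => h2; have := tle h2 => h4.
by apply: mulr_ge0; have := ht h1; lra.
Qed.

Lemma cV_out c : c \in V -> c != v -> (c <= x)%N \/ (y <= c)%N.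
Proof.
move=> hc hcv; have := hc1 hc; have := hc2 hc.
have hcv' : nat_of_ord c != nat_of_ord v by [].

case: (leqP c x) => h1; first by left.
case: (leqP y c) => h2; first by right.
rewrite /= !andbT -!leqNgt => h3 h4; exfalso; move: hcv'.
by rewrite eqn_leq h3 h4.
Qed.

Lemma s3 c : c \in V -> c != v -> orient t y x c <= 0.
Proof.
move=> hc hcv; rewrite orientE -mulrA; have h0 := ht (ltn_trans hxv hvy).
apply: mulr_le0_ge0; first lra.
case: (cV_out hc hcv) => h1.
  have := tle h1 => h2; by apply: mulr_le0; lra.
have := tle h1 => h2; by apply: mulr_ge0; lra.
Qed.

Lemma s3s c : c \in V -> c != v -> c != x -> c != y -> orient t y x c < 0.
Proof.
move=> hc hcv hcx hcy; rewrite orientE -mulrA; have h0 := ht (ltn_trans hxv hvy).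
apply: neg_pos; first lra.
case: (cV_out hc hcv) => h1.
  have h1' : (c < x)%N by rewrite ltn_neqAle h1 andbT.
  have := ht h1' => h2; by apply: neg_neg; lra.
have h1' : (y < c)%N by rewrite ltn_neqAle h1 andbT eq_sym.
have := ht h1' => h2; by apply: mulr_gt0; lra.
Qed.

Lemma s4 : 0 < orient t y x v.
Proof.
rewrite orientE -mulrA; have h0 := ht hxv; have h1 := ht hvy.
apply: neg_neg; first lra.
apply: neg_pos; lra.
Qed.

Lemma s5 : 0 < orient t x v y.
Proof.
rewrite orientE; have h0 := ht hxv; have h1 := ht hvy.
apply: mulr_gt0; first apply: mulr_gt0; lra.
Qed.

Lemma hxv' : x != v.
Proof. by apply/eqP => e; move: hxv; rewrite e ltnn. Qed.
Lemma hvy' : v != y.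
Proof. by apply/eqP => e; move: hvy; rewrite e ltnn. Qed.
Lemma hxy' : x != y.
Proof. by apply/eqP => e; move: (ltn_trans hxv hvy); rewrite e ltnn. Qed.

Lemma tri_sub : [set x; v; y] \subset V.
Proof. by apply/subsetP => c; rewrite !inE => /orP [/orP [] | ] /eqP ->. Qed.

Lemma key1 z : conv t V z -> conv t (V :\ v) z \/ conv t [set x; v; y] z.
Proof.
move=> hz.
have g1 := conv_gline_ge0 hz s1.
have g2 := conv_gline_ge0 hz s2.
case: (lerP 0 (gline y x z)) => hG.
  right.
  have [lam [l0 l1 l2 l3 _]] := bary hxv' hxy' hvy' s5 g2 hG g1.
  by exists lam; split.
left.
move: hz => [lam [l0 l1 l2 lz]].
set Gv := orient t y x v.
have hGv : 0 < Gv := s4.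
set G := gline y x z in hG.
have hD0 : Gv - G != 0 by rewrite gt_eqF //; lra.
set r := Gv / (Gv - G).
have hr0 : 0 < r by apply: divr_gt0; lra.
have hr1 : r < 1 by rewrite ltr_pdivrMr; lra.
set q := ((1 - r) * (pt t v).1 + r * z.1, (1 - r) * (pt t v).2 + r * z.2).
have hq0 : gline y x q = 0.
  rewrite /q gline_two gline_pt -/Gv -/G /r; field; done.
have hq1 : 0 <= gline x v q.
  rewrite /q gline_two gline_pt; apply: addr_ge0.
    have -> : orient t x v v = 0 by rewrite orientE; ring.
    by rewrite mulr0.
  by apply: mulr_ge0 => //; lra.
have hq2 : 0 <= gline v y q.
  rewrite /q gline_two gline_pt; apply: addr_ge0.
    have -> : orient t v y v = 0 by rewrite orientE; ring.
    by rewrite mulr0.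
  by apply: mulr_ge0 => //; lra.
have hq0' : 0 <= gline y x q by rewrite hq0.
have [ka [k0 k1 k2 kq kv]] := bary hxv' hxy' hvy' s5 hq2 hq0' hq1.
rewrite hq0 mul0r in kv.
have hr1' : 1 - r != 0 by rewrite gt_eqF //; lra.
set al := lam v / (1 - r).
have hal : 0 <= al by apply: divr_ge0 => //; lra.
set D := 1 + al * r.
have hD : 0 < D by rewrite /D; have := mulr_ge0 hal (ltW hr0); lra.
have hD' : D != 0 by rewrite gt_eqF.
have hD2 : 1 - r + lam v * r != 0.
  by rewrite gt_eqF //; have := mulr_ge0 (l0 v) (ltW hr0); lra.
exists (fun i => (al * ka i + (if i == v then 0 else lam i)) / D); split.
- move=> i; apply: divr_ge0; last exact: ltW.
  apply: addr_ge0; first exact: mulr_ge0.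
  by case: ifP.
- move=> i; rewrite in_setD1 negb_and negbK => /orP [/eqP ->|hi].
    by rewrite kv eqxx mulr0 add0r mul0r.
  case: eqP => [-> | _]; first by rewrite kv mulr0 add0r mul0r.
  rewrite (l1 _ hi) k1 ?mulr0 ?add0r ?mul0r //.
  apply: contra hi; exact: (subsetP tri_sub).
- have := lin2 ka (fun i => if i == v then 0 else lam i) (fun _ => 1) al D.
  rewrite (eq_bigr _ (fun i _ => mulr1 _)) => ->.
  rewrite drop1 (eq_bigr _ (fun i _ => mulr1 _)) (eq_bigr _ (fun i _ => mulr1 _)).
  rewrite k2 l2 mulr1 /D /al; field; by rewrite hr1' hD2.
- have e1 := lin2 ka (fun i => if i == v then 0 else lam i) (fun i => (pt t i).1) al D.
  have e2 := lin2 ka (fun i => if i == v then 0 else lam i) (fun i => (pt t i).2) al D.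
  rewrite e1 e2 !drop1.
  have hq1x : \sum_i ka i * (pt t i).1 = q.1 by rewrite kq.
  have hq2x : \sum_i ka i * (pt t i).2 = q.2 by rewrite kq.
  rewrite hq1x hq2x {e1 e2 hq1x hq2x kq}.
  have ez1 : \sum_i lam i * (pt t i).1 = z.1 by rewrite lz.
  have ez2 : \sum_i lam i * (pt t i).2 = z.2 by rewrite lz.
  rewrite ez1 ez2 /q /= [z in LHS]surjective_pairing /D /al.
  congr (_, _); field; by rewrite hr1' hD2.
Qed.
Lemma tri_ge0 c : c \in [set x; v; y] -> 0 <= orient t y x c.
Proof.
rewrite !inE => /orP [/orP [] | ] /eqP ->.
- by have -> : orient t y x x = 0 by rewrite orientE; ring.
- exact: ltW s4.
- by have -> : orient t y x y = 0 by rewrite orientE; ring.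
Qed.

Lemma key2 (s : {set 'I_n}) z : s \subset V :\ v ->
  conv t [set x; v; y] z -> conv t s z -> conv t ([set x; v; y] :&: s) z.
Proof.
move=> hs htri hcs.
have hsV : forall c, c \in s -> c \in V /\ c != v.
  move=> c hc; have := subsetP hs c hc; rewrite in_setD1 => /andP [-> ->]; done.
have hge := conv_gline_ge0 htri tri_ge0.
have hle : gline y x z <= 0.
  apply: (conv_gline_le0 hcs) => c hc; have [h1 h2] := hsV c hc; exact: s3.
have h0 : gline y x z = 0 by apply/eqP; rewrite eq_le hle hge.
move: hcs h0 => [mu [m0 m1 m2 mz]].
rewrite mz gline_comb // => hsum.
have hterm : forall c, mu c * orient t y x c = 0.
  have hn : \sum_i - (mu i * orient t y x i) = 0 by rewrite sumrN hsum oppr0.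
  have hnn : forall i, true -> 0 <= - (mu i * orient t y x i).
    move=> i _; rewrite oppr_ge0; case: (boolP (i \in s)) => hi.
      have [h1 h2] := hsV i hi; apply: mulr_ge0_le0 => //; exact: s3.
    by rewrite m1 // mul0r.
  move=> c; have hh := psumr_eq0P hnn hn; have := hh c isT.
  by move/eqP; rewrite oppr_eq0 => /eqP.
exists mu; split => // i; rewrite in_setI negb_and => /orP [hi|hi]; last exact: m1.
case: (boolP (i \in s)) => his; last exact: m1.
have [h1 h2] := hsV i his.
move: hi; rewrite !inE !negb_or => /andP [/andP [hix hiv] hiy].
have ho := s3s h1 h2 hix hiy.
have := hterm i; move/eqP; rewrite mulf_eq0 => /orP [/eqP //|/eqP ho0].
by move: ho; rewrite ho0 ltxx.
Qed.
Lemma card_tri : #|[set x; v; y]| = 3%N.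
Proof.
rewrite -setUA cardsU1 cards2 !inE negb_or hxv' hxy' hvy' /=.
done.
Qed.

Lemma glue (T' : {set {set 'I_n}}) : is_triangulation t (V :\ v) T' ->
  is_triangulation t V ([set x; v; y] |: T').
Proof.
move=> [h1 h2 h3].
have hsub : forall s, s \in T' -> s \subset V :\ v by move=> s /h1 [].
have hVv : V :\ v \subset V by apply: subsetDl.
split.
- move=> s; rewrite in_setU1 => /orP [/eqP ->|hs].
    by split; [exact: tri_sub | rewrite card_tri].
  have [hs1 hs2] := h1 s hs; split => //; exact: subset_trans hs1 hVv.
- move=> z; split.
    move/key1 => [hz|hz].
      have [s hs hzs] := (h2 z).1 hz; exists s => //; rewrite in_setU1 hs orbT.
      done.
    by exists [set x; v; y] => //; rewrite in_setU1 eqxx.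
  move=> [s]; rewrite in_setU1 => /orP [/eqP ->|hs] hz.
    exact: conv_sub tri_sub hz.
  apply: conv_sub (subset_trans (hsub s hs) hVv) hz.
- move=> s1 s2; rewrite !in_setU1 => /orP [/eqP ->|hs1] /orP [/eqP ->|hs2] z.
  + rewrite setIid; tauto.
  + split; first by move=> [ha hb]; exact: key2 (hsub _ hs2) ha hb.
    move=> hz; split; apply: conv_sub hz; [exact: subsetIl | exact: subsetIr].
  + split; first by move=> [ha hb]; rewrite setIC; exact: key2 (hsub _ hs1) hb ha.
    move=> hz; split; apply: conv_sub hz; [exact: subsetIl | exact: subsetIr].
  + exact: h3.
Qed.
End Ear.

Lemma base_tri (V : {set 'I_n}) : #|V| = 3%N -> is_triangulation t V [set V].
Proof.
move=> hV; split.
- by move=> s; rewrite inE => /eqP ->; split => //; rewrite hV.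
- move=> z; split; first by move=> hz; exists V => //; rewrite inE.
  by move=> [s]; rewrite inE => /eqP ->.
- move=> s1 s2; rewrite !inE => /eqP -> /eqP -> z; rewrite setIid; tauto.
Qed.

End Geo.

Lemma card3 n (a b c : 'I_n) : (a < b)%N -> (b < c)%N -> #|[set a; b; c]| = 3%N.
Proof.
move=> hab hbc.
have h1 : a != b by apply/eqP => e; move: hab; rewrite e ltnn.
have h2 : b != c by apply/eqP => e; move: hbc; rewrite e ltnn.
have h3 : a != c by apply/eqP => e; move: (ltn_trans hab hbc); rewrite e ltnn.
by rewrite -setUA cardsU1 cards2 !inE negb_or h1 h2 h3.
Qed.

Lemma in3 n (a b c d : 'I_n) : d \in [set a; b; c] -> [\/ d = a, d = b | d = c].
Proof. by rewrite !inE => /orP [/orP [] | ] /eqP ->; [apply: Or31 | apply: Or32 | apply: Or33]. Qed.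

Section Main.
Variables (R : realFieldType) (n : nat) (t : 'I_n -> R).
Hypothesis ht : forall i j : 'I_n, (i < j)%N -> t i < t j.
Variables (L M Rg : {set {set 'I_n}}).
Hypotheses (hLR : condLR L Rg) (hLMR : condLMR L M Rg) (hMM : condMM M).

Definition edges_ok (T : {set {set 'I_n}}) :=
  forall (s e : {set 'I_n}), s \in T -> e \subset s -> #|e| = 2%N -> edge_ok L M Rg e.

Lemma tri_edges (x v y : 'I_n) : (x < v)%N -> (v < y)%N ->
  conds L M Rg x v -> conds L M Rg v y -> conds L M Rg x y ->
  forall e : {set 'I_n}, e \subset [set x; v; y] -> edge_ok L M Rg e.
Proof.
move=> hxv hvy c1 c2 c3 e he v1 v2 hev hlt.
have hv1 : v1 \in [set x; v; y] by apply: (subsetP he); rewrite hev !inE eqxx.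
have hv2 : v2 \in [set x; v; y] by apply: (subsetP he); rewrite hev !inE eqxx orbT.
move: hlt; case: (in3 hv1) => ->; case: (in3 hv2) => -> hlt; try exact: c1; try exact: c2; try exact: c3; lia.
Qed.

Lemma base_edges (V : {set 'I_n}) : #|V| = 3%N -> HB L M Rg V -> edges_ok [set V].
Proof.
move=> hV hB s e; rewrite inE => /eqP -> he _ v1 v2 hev hlt.
have hv1 : v1 \in V by apply: (subsetP he); rewrite hev !inE eqxx.
have hv2 : v2 \in V by apply: (subsetP he); rewrite hev !inE eqxx orbT.
apply: hB => //.
case: (classic (exists2 c, c \in V & ((v1 < c) && (c < v2))%N)) => [[c hc /andP [h1 h2]]|hno].
  right => c' hc'.
  have eV : [set v1; c; v2] = V.
    apply/eqP; rewrite eqEcard (card3 h1 h2) hV leqnn andbT.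
    by apply/subsetP => d /in3 [] ->.
  by move: hc'; rewrite -eV => /in3 [] ->; lia.
left => c hc; apply/negP => hh; apply: hno; exists c => //.
Qed.

Lemma HB_del (V : {set 'I_n}) (x v y : 'I_n) :
  [/\ x \in V, v \in V, y \in V, (x < v)%N & (v < y)%N] ->
  (forall c, c \in V -> ~~ ((x < c) && (c < v))%N) ->
  (forall c, c \in V -> ~~ ((v < c) && (c < y))%N) -> conds L M Rg x y ->
  HB L M Rg V -> HB L M Rg (V :\ v).
Proof.
move=> [hx hv hy hxv hvy] hc1 hc2 hxy hB a b.
rewrite !in_setD1 => /andP [hav ha] /andP [hbv hb] hab [hcons|hext].
  case: (boolP ((a < v) && (v < b))%N) => [/andP [h1 h2]|hnb].
    have hxv' : x != v by apply/eqP => e; move: hxv; rewrite e ltnn.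
    have hyv' : y != v by apply/eqP => e; move: hvy; rewrite e ltnn.
    have ea : a = x.
      apply: val_inj; case: (ltngtP a x) => h //.
        by have := hcons x; rewrite in_setD1 hxv' hx /= => /(_ isT); lia.
      by have := hc1 a ha; lia.
    have eb : b = y.
      apply: val_inj; case: (ltngtP b y) => h //.
        by have := hc2 b hb; lia.
      by have := hcons y; rewrite in_setD1 hyv' hy /= => /(_ isT); lia.
    by rewrite ea eb.
  apply: hB => //; left => c hc.
  case: (eqVneq c v) => [-> //|hcv].
  by apply: hcons; rewrite in_setD1 hcv hc.
apply: hB => //; right => c hc.
case: (eqVneq c v) => [->|hcv]; last by apply: hext; rewrite in_setD1 hcv hc.
have hxv' : x != v by apply/eqP => e; move: hxv; rewrite e ltnn.
have hyv' : y != v by apply/eqP => e; move: hvy; rewrite e ltnn.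
have := hext x; rewrite in_setD1 hxv' hx => /(_ isT).
have := hext y; rewrite in_setD1 hyv' hy => /(_ isT).
lia.
Qed.

Lemma main_ind k : forall V : {set 'I_n}, #|V| = k -> (3 <= k)%N -> HB L M Rg V ->
  exists T, is_triangulation t V T /\ edges_ok T.
Proof.
elim: k => [|k IH] V hV hk hB; first by [].
case: (ltngtP k 2) => hk2.
- lia.
- have [x [v [y [[hx hv hy hxv hvy] hc1 hc2 hxy]]]] := find_ear hLR hLMR hMM (V := V) ltac:(lia) hB.
  have hV' : #|V :\ v| = k by move: hV; rewrite (cardsD1 v V) hv add1n => -[].
  have [T' [hT' hE']] := IH (V :\ v) hV' ltac:(lia) (HB_del (And5 hx hv hy hxv hvy) hc1 hc2 hxy hB).
  exists ([set x; v; y] |: T'); split.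
    exact: (glue ht hx hv hy hxv hvy hc1 hc2 hT').
  move=> s e; rewrite in_setU1 => /orP [/eqP -> he _|hs he he2].
    apply: (tri_edges hxv hvy _ _ hxy he).
      apply: hB => //; left => c hc; exact: hc1.
    apply: hB => //; left => c hc; exact: hc2.
  exact: hE' hs he he2.
- subst k; exists [set V]; split.
    exact: base_tri.
  exact: base_edges.
Qed.
End Main.

Lemma hP_HB (R : realFieldType) (n : nat) (t : 'I_n -> R)
  (ht : forall i j : 'I_n, (i < j)%N -> t i < t j)
  (L M Rg : {set {set 'I_n}}) (V : {set 'I_n}) :
  (forall a b : 'I_n, polygon_edge t V a b -> edge_ok L M Rg [set a; b]) -> HB L M Rg V.
Proof.
move=> hP a b ha hb hab hcase.
have hab' : a != b by apply/eqP => e; move: hab; rewrite e ltnn.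
have htab := ht _ _ hab.
suff hpe : polygon_edge t V a b by exact: (hP a b hpe a b erefl hab).
split => //; case: hcase => hc; [left|right] => c hcV; rewrite orientE -mulrA.
- apply: mulr_ge0; first lra.
  have := hc c hcV; case: (leqP c a) => h1 H.
    by have := tle ht h1 => h2; apply: mulr_le0; lra.
  move: H => /=; rewrite -leqNgt => h2; have := tle ht h2 => h4.
  by apply: mulr_ge0; have := ht _ _ h1; lra.
- apply: mulr_ge0_le0; first lra.
  have /andP [h1 h2] := hc c hcV.
  have := tle ht h1; have := tle ht h2 => h3 h4.
  by apply: mulr_ge0_le0; lra.
Qed.

Unset Implicit Arguments.

Theorem lemma3p8 (R : realFieldType) (n : nat) (t : 'I_n -> R)
  (ht : forall i j : 'I_n, (i < j)%N -> t i < t j)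
  (L M Rg : {set {set 'I_n}})
  (hL : forall e, e \in L -> #|e| = 2%N)
  (hR : forall e, e \in Rg -> #|e| = 2%N)
  (hM : forall s, s \in M -> #|s| = 3%N)
  (hLR : condLR L Rg) (hLMR : condLMR L M Rg) (hMM : condMM M)
  (V : {set 'I_n}) (hV : (3 <= #|V|)%N)
  (hP : forall a b : 'I_n, polygon_edge t V a b -> edge_ok L M Rg [set a; b]) :
  exists T : {set {set 'I_n}},
    is_triangulation t V T /\
    (forall (s e : {set 'I_n}), s \in T -> e \subset s -> #|e| = 2%N -> edge_ok L M Rg e).
Proof.
have [T [h1 h2]] := main_ind ht hLR hLMR hMM (k := #|V|) (V := V) erefl hV (hP_HB ht hP).
by exists T.
Qed.
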